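(* Let $\beta=(\beta_{ij})_{i,j\ge 0,\ i+j\le 6}$ be a real sequence such that $\mathcal M(3)(\beta)$ is positive semidefinite, $\mathcal M(2)(\beta)$ is positive definite, and $\operatorname{rank}\mathcal M(3)=\operatorname{card}\mathcal V=8$, where $\mathcal V=\{(x_1,y_1),\dots,(x_8,y_8)\}$ is the algebraic variety of $\mathcal M(3)$. Suppose the columns $\mathfrak B_1=\{1,X,Y,X^2,XY,Y^2,X^3,X^2Y\}$ form a basis of the column space of $\mathcal M(3)$. Then $\beta$ has a representing measure if and only if $\mathcal M(3)$ is weakly consistent and, for all $i,j\ge 0$ with $0\le i+j\le 2$, $$\Lambda_\beta\big(x^iy^j(x^4-a_0-a_1x-a_2y-a_3x^2-a_4xy-a_5y^2-a_6x^3-a_7x^2y)\big)=0$$ and $$\Lambda_\beta\big(x^iy^j(x^3y-b_0-b_1x-b_2y-b_3x^2-b_4xy-b_5y^2-b_6x^3-b_7x^2y)\big)=0,$$ where $(a_0,\dots,a_7)^T=W_{\mathfrak B_1}^{-1}(x_1^4,\dots,x_8^4)^T$ and $(b_0,\dots,b_7)^T=W_{\mathfrak B_1}^{-1}(x_1^3y_1,\dots,x_8^3y_8)^T$.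
   Context: The moment matrix $\mathcal M(3)(\beta)$ has rows and columns indexed by $1,X,Y,X^2,XY,Y^2,X^3,X^2Y,XY^2,Y^3$ in this order, with entry $\beta_{i+k,j+l}$ in row $X^iY^j$ and column $X^kY^l$; $\mathcal M(2)(\beta)$ is its principal submatrix indexed by monomials of degree $\le 2$. For $p(x,y)=\sum a_{ij}x^iy^j$ of degree $\le 3$, $p(X,Y)=\sum a_{ij}X^iY^j$ is the corresponding linear combination of columns. The algebraic variety is $\mathcal V=\bigcap\{\mathcal Z(p):\deg p\le 3,\ p(X,Y)=\mathbf 0\}$ with $\mathcal Z(p)$ the real zero set of $p$. The Riesz functional $\Lambda_\beta$ on polynomials of degree $\le 6$ is $\Lambda_\beta(\sum a_{ij}x^iy^j)=\sum a_{ij}\beta_{ij}$. A representing measure is a positive Borel measure $\mu$ on $\mathbb R^2$ with $\beta_{ij}=\int x^iy^j\,d\mu$ for $i+j\le 6$. $\mathcal M(3)$ is weakly consistent if every polynomial $p$ of degree $\le 3$ vanishing on $\mathcal V$ satisfies $p(X,Y)=\mathbf 0$. The generalized Vandermonde matrix $W$ is the $8\times 10$ matrix whose $k$-th row is $(1,x_k,y_k,x_k^2,x_ky_k,y_k^2,x_k^3,x_k^2y_k,x_ky_k^2,y_k^3)$, with columns labeled $1,X,Y,\dots,Y^3$; for a set $\mathcal B$ of column labels, $W_{\mathcal B}$ is the square submatrix of $W$ formed by the columns in $\mathcal B$ (in the listed order). *)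

(* Defs.v *)
From HB Require Import structures.
From mathcomp Require Import all_boot all_order all_algebra.
From mathcomp Require Import all_classical all_reals all_analysis.
Set Implicit Arguments. Unset Strict Implicit. Unset Printing Implicit Defensive.
Import Order.TTheory GRing.Theory Num.Theory.
Local Open Scope ring_scope.

Section Defs.
Variable R : realType.

(* Monomials of degree <= 3 in the order 1,X,Y,X^2,XY,Y^2,X^3,X^2Y,XY^2,Y^3 ;
   (i,j) stands for X^i Y^j. *)
Definition monos : seq (nat * nat) :=
  [:: (0,0); (1,0); (0,1); (2,0); (1,1); (0,2); (3,0); (2,1); (1,2); (0,3)]%N.
Definition mono (k : 'I_10) : nat * nat := nth (0,0)%N monos k.

Definition M3 (beta : nat -> nat -> R) : 'M[R]_10 :=
  \matrix_(r < 10, c < 10)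
    beta ((mono r).1 + (mono c).1)%N ((mono r).2 + (mono c).2)%N.

(* M(2)(beta): principal submatrix indexed by monomials of degree <= 2. *)
Definition M2 (beta : nat -> nat -> R) : 'M[R]_6 :=
  mxsub (widen_ord (isT : (6 <= 10)%N)) (widen_ord (isT : (6 <= 10)%N)) (M3 beta).

Definition psd_mx n (A : 'M[R]_n) : Prop :=
  forall v : 'cV[R]_n, 0 <= (v^T *m A *m v) 0 0.
Definition pd_mx n (A : 'M[R]_n) : Prop :=
  forall v : 'cV[R]_n, v != 0 -> 0 < (v^T *m A *m v) 0 0.

(* Real bivariate polynomials: {poly {poly R}}, outer variable x, inner y. *)
Definition xx : {poly {poly R}} := 'X.
Definition yy : {poly {poly R}} := ('X)%:P.
Definition mon (i j : nat) : {poly {poly R}} := xx ^+ i * yy ^+ j.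
Definition cst (c : R) : {poly {poly R}} := c%:P%:P.
Definition coef2 (p : {poly {poly R}}) (i j : nat) : R := (p`_i)`_j.
Definition deg_le (p : {poly {poly R}}) (n : nat) : Prop :=
  forall i j, (n < i + j)%N -> coef2 p i j = 0.
Definition eval2 (p : {poly {poly R}}) (x y : R) : R := (p.[x%:P]).[y].

Definition Lambda (beta : nat -> nat -> R) (p : {poly {poly R}}) : R :=
  \sum_(i < size p) \sum_(j < size p`_i) coef2 p i j * beta i j.

(* p(X,Y): the corresponding linear combination of columns of M(3)
   (meaningful for deg p <= 3). *)
Definition polycol (beta : nat -> nat -> R) (p : {poly {poly R}}) : 'cV[R]_10 :=
  \sum_(k < 10) coef2 p (mono k).1 (mono k).2 *: col k (M3 beta).

Definition variety (beta : nat -> nat -> R) (x y : R) : Prop :=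
  forall p, deg_le p 3 -> polycol beta p = 0 -> eval2 p x y = 0.

Definition weakly_consistent (beta : nat -> nat -> R) : Prop :=
  forall p, deg_le p 3 -> (forall x y, variety beta x y -> eval2 p x y = 0) ->
    polycol beta p = 0.

Definition Wmx (pts : 'I_8 -> R * R) : 'M[R]_(8, 10) :=
  \matrix_(k < 8, c < 10) ((pts k).1 ^+ (mono c).1 * (pts k).2 ^+ (mono c).2).
Definition B1 : 'I_8 -> 'I_10 := widen_ord (isT : (8 <= 10)%N).
Definition WB1 (pts : 'I_8 -> R * R) : 'M[R]_8 := colsub B1 (Wmx pts).

Definition B1_basis (M : 'M[R]_10) : Prop :=
  row_free (colsub B1 M)^T /\ ((colsub B1 M)^T == M^T)%MS.

Definition reduced (c : 'cV[R]_8) (q : {poly {poly R}}) (i j : nat) :=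
  mon i j * (q - \sum_(k < 8) cst (c k 0) * mon (mono (B1 k)).1 (mono (B1 k)).2).

End Defs.

Local Open Scope classical_set_scope.
Local Open Scope ereal_scope.

Definition representing (R : realType)
  (mu : {measure set (R * R)%type -> \bar R}) (beta : nat -> nat -> R) : Prop :=
  forall i j : nat, (i + j <= 6)%N ->
    mu.-integrable setT (fun p : R * R => ((p.1 ^+ i * p.2 ^+ j)%R)%:E) /\
    \int[mu]_p ((p.1 ^+ i * p.2 ^+ j)%R)%:E = (beta i j)%:E.

(* Main.v *)
Require Import Defs.
From HB Require Import structures.
From mathcomp Require Import all_boot all_order all_algebra.
From mathcomp Require Import all_classical all_reals all_analysis.
From mathcomp Require Import measurable_realfun.
Import Order.TTheory GRing.Theory Num.Theory.
Local Open Scope ring_scope.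

Set Implicit Arguments. Unset Strict Implicit. Unset Printing Implicit Defensive.

Section P1.
Variable R : realType.
Local Notation cst := Defs.cst.
Implicit Types p q : {poly {poly R}}.
Implicit Types c x y : R.

Lemma poly2P p q : (forall i j, coef2 p i j = coef2 q i j) -> p = q.
Proof. move=> H; apply/polyP => i; apply/polyP => j; exact: H. Qed.

Lemma coef2D p q i j : coef2 (p + q) i j = coef2 p i j + coef2 q i j.
Proof. by rewrite /coef2 !coefD. Qed.
Lemma coef2N p i j : coef2 (- p) i j = - coef2 p i j.
Proof. by rewrite /coef2 !coefN. Qed.
Lemma coef2B p q i j : coef2 (p - q) i j = coef2 p i j - coef2 q i j.
Proof. by rewrite coef2D coef2N. Qed.
Lemma coef2_sum I (r : seq I) (P : pred I) (F : I -> {poly {poly R}}) i j :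
  coef2 (\sum_(k <- r | P k) F k) i j = \sum_(k <- r | P k) coef2 (F k) i j.
Proof. by rewrite /coef2 !coef_sum. Qed.
Lemma coef2_cstM c p i j : coef2 (cst c * p) i j = c * coef2 p i j.
Proof. by rewrite /coef2 /cst !coefCM. Qed.
Lemma coef2_0 i j : coef2 (0 : {poly {poly R}}) i j = 0.
Proof. by rewrite /coef2 !coef0. Qed.

Lemma monE a b : mon R a b = 'X^a * ('X^b)%:P.
Proof. by rewrite /mon /xx /yy rmorphXn. Qed.

Lemma coef2_monM a b p i j : coef2 (mon R a b * p) i j =
  if (a <= i)%N && (b <= j)%N then coef2 p (i - a) (j - b) else 0.
Proof.
rewrite /coef2 monE -mulrA coefXnM; case: (ltnP i a) => Hia /=.
  by rewrite coef0.
by rewrite coefCM coefXnM; case: ltnP.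
Qed.

Lemma coef2_mon a b i j : coef2 (mon R a b) i j = (i == a)%:R * (j == b)%:R.
Proof.
rewrite -[mon R a b]mulr1 coef2_monM /coef2 coef1.
case: (leqP a i) => Ha /=; last first.
  by rewrite ltn_eqF ?mul0r.
case: (leqP b j) => Hb /=; last first.
  by rewrite (ltn_eqF Hb) ?mulr0.
rewrite subn_eq0 eqn_leq Ha andbT; case: (i <= a)%N; last by rewrite coef0 mul0r.
by rewrite mul1r coefC subn_eq0 eqn_leq Hb andbT; case: (j <= b)%N.
Qed.

Lemma mon_mul a b a2 b2 : mon R a b * mon R a2 b2 = mon R (a + a2) (b + b2).
Proof. by rewrite !monE mulrACA -exprD -rmorphM -exprD. Qed.

Lemma eval2D p q x y : eval2 (p + q) x y = eval2 p x y + eval2 q x y.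
Proof. by rewrite /eval2 !hornerD. Qed.
Lemma eval2N p x y : eval2 (- p) x y = - eval2 p x y.
Proof. by rewrite /eval2 !hornerN. Qed.
Lemma eval2B p q x y : eval2 (p - q) x y = eval2 p x y - eval2 q x y.
Proof. by rewrite eval2D eval2N. Qed.
Lemma eval2M p q x y : eval2 (p * q) x y = eval2 p x y * eval2 q x y.
Proof. by rewrite /eval2 !hornerM. Qed.
Lemma eval2_cst c x y : eval2 (cst c) x y = c.
Proof. by rewrite /eval2 /cst !hornerC. Qed.
Lemma eval2_mon a b x y : eval2 (mon R a b) x y = x ^+ a * y ^+ b.
Proof. by rewrite /eval2 monE !hornerE. Qed.
Lemma eval2_sum I (r : seq I) (P : pred I) (F : I -> {poly {poly R}}) x y :
  eval2 (\sum_(k <- r | P k) F k) x y = \sum_(k <- r | P k) eval2 (F k) x y.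
Proof.
elim/big_rec2: _ => [|i a b _ <-]; first by rewrite /eval2 !horner0.
by rewrite eval2D.
Qed.

End P1.


Section P2.
Variable R : realType.
Local Notation cst := Defs.cst.
Implicit Types p q : {poly {poly R}}.
Implicit Types c x y : R.

Lemma sum_ord_eq (f : nat -> R) n m :
  (forall j, (n <= j)%N -> f j = 0) -> (forall j, (m <= j)%N -> f j = 0) ->
  \sum_(j < n) f j = \sum_(j < m) f j.
Proof.
wlog le_nm : n m / (n <= m)%N.
  move=> W Hn Hm; case: (leqP n m) => H; first exact: W.
  by symmetry; apply: W => //; exact: ltnW.
move=> Hn _; rewrite -!(big_mkord xpredT) (big_cat_nat (leq0n n) le_nm) /=.
rewrite [X in _ = _ + X]big1_seq ?addr0 // => j /andP[_].
by rewrite mem_index_iota => /andP[Hj _]; apply: Hn.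
Qed.

Lemma sum_delta (n u : nat) (F : nat -> R) :
  \sum_(i < n) (u == i)%:R * F i = if (u < n)%N then F u else 0.
Proof.
case: ifP => H.
  rewrite (bigD1 (Ordinal H)) //= eqxx mul1r big1 ?addr0 // => i Hi.
  rewrite (_ : (u == i) = false) ?mul0r //; apply/negbTE; move: Hi.
  by apply: contra => /eqP Hu; apply/eqP/val_inj; rewrite /= Hu.
rewrite big1 // => i _; rewrite (_ : (u == i) = false) ?mul0r //.
by apply/negbTE; apply: contraFN H => /eqP ->.
Qed.

Definition L7 (beta : nat -> nat -> R) p :=
  \sum_(i < 7) \sum_(j < 7) coef2 p i j * beta i j.

Variable beta : nat -> nat -> R.

Lemma L7D p q : L7 beta (p + q) = L7 beta p + L7 beta q.
Proof.
rewrite /L7 -big_split; apply: eq_bigr => i _; rewrite -big_split.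
by apply: eq_bigr => j _; rewrite coef2D mulrDl.
Qed.
Lemma L7N p : L7 beta (- p) = - L7 beta p.
Proof.
rewrite /L7 -sumrN; apply: eq_bigr => i _; rewrite -sumrN.
by apply: eq_bigr => j _; rewrite coef2N mulNr.
Qed.
Lemma L7B p q : L7 beta (p - q) = L7 beta p - L7 beta q.
Proof. by rewrite L7D L7N. Qed.
Lemma L7_cstM c p : L7 beta (cst c * p) = c * L7 beta p.
Proof.
rewrite /L7 mulr_sumr; apply: eq_bigr => i _; rewrite mulr_sumr.
by apply: eq_bigr => j _; rewrite coef2_cstM mulrA.
Qed.
Lemma L7_0 : L7 beta 0 = 0.
Proof. by rewrite /L7 big1 // => i _; rewrite big1 // => j _; rewrite coef2_0 mul0r. Qed.
Lemma L7_sum I (r : seq I) (P : pred I) (F : I -> {poly {poly R}}) :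
  L7 beta (\sum_(k <- r | P k) F k) = \sum_(k <- r | P k) L7 beta (F k).
Proof.
elim/big_rec2: _ => [|i a b _ <-]; first exact: L7_0.
by rewrite L7D.
Qed.
Lemma L7_mon a b : (a < 7)%N -> (b < 7)%N -> L7 beta (mon R a b) = beta a b.
Proof.
move=> Ha Hb; rewrite /L7.
have E (i j : nat) : coef2 (mon R a b) i j * beta i j =
    (a == i)%:R * ((b == j)%:R * beta i j).
  by rewrite coef2_mon (eq_sym i) (eq_sym j) -mulrA.
under eq_bigr => i _ do under eq_bigr => j _ do rewrite E.
under eq_bigr => i _ do rewrite -mulr_sumr (sum_delta 7 b (fun j => beta i j)) Hb.
by rewrite (sum_delta 7 a (fun i => beta i b)) Ha.
Qed.

Lemma deg_le_mono p m n : (m <= n)%N -> deg_le p m -> deg_le p n.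
Proof. by move=> Hmn H i j Hij; apply: H; exact: leq_ltn_trans Hij. Qed.
Lemma deg_leD p q n : deg_le p n -> deg_le q n -> deg_le (p + q) n.
Proof. by move=> Hp Hq i j Hij; rewrite coef2D Hp ?Hq ?addr0. Qed.
Lemma deg_leN p n : deg_le p n -> deg_le (- p) n.
Proof. by move=> Hp i j Hij; rewrite coef2N Hp ?oppr0. Qed.
Lemma deg_leB p q n : deg_le p n -> deg_le q n -> deg_le (p - q) n.
Proof. by move=> Hp Hq; apply: deg_leD => //; exact: deg_leN. Qed.
Lemma deg_le0 n : deg_le (0 : {poly {poly R}}) n.
Proof. by move=> i j _; rewrite coef2_0. Qed.
Lemma deg_le_sum I (r : seq I) (P : pred I) (F : I -> {poly {poly R}}) n :
  (forall k, P k -> deg_le (F k) n) -> deg_le (\sum_(k <- r | P k) F k) n.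
Proof.
move=> H; elim/big_rec: _ => [|k s Pk Hs]; first exact: deg_le0.
by apply: deg_leD => //; exact: H.
Qed.
Lemma deg_le_cstM c p n : deg_le p n -> deg_le (cst c * p) n.
Proof. by move=> Hp i j Hij; rewrite coef2_cstM Hp ?mulr0. Qed.
Lemma deg_le_monM a b p n : deg_le p n -> deg_le (mon R a b * p) (a + b + n).
Proof.
move=> Hp i j Hij; rewrite coef2_monM; case: ifP => // /andP[Ha Hb].
apply: Hp; rewrite -(ltn_add2l (a + b)) addnACA !subnKC //.
Qed.
Lemma deg_le1 : deg_le (1 : {poly {poly R}}) 0.
Proof.
move=> i j; rewrite /coef2 coef1; case: i => [|i] /= Hij; last by rewrite coef0.
by rewrite coef1; case: j Hij.
Qed.
Lemma deg_le_mon a b : deg_le (mon R a b) (a + b).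
Proof.
rewrite -[mon R a b]mulr1 -[(a+b)%N]addn0; apply: deg_le_monM; exact: deg_le1.
Qed.

Lemma Lambda_L7 p : deg_le p 6 -> Lambda beta p = L7 beta p.
Proof.
move=> Hp; rewrite /Lambda /L7.
have Hin i : \sum_(j < size p`_i) coef2 p i j * beta i j =
             \sum_(j < 7) coef2 p i j * beta i j.
  apply: (@sum_ord_eq (fun j => coef2 p i j * beta i j) (size p`_i) 7) => j Hj.
    by rewrite /coef2 nth_default ?mul0r.
  by rewrite Hp ?mul0r // (leq_trans Hj) // leq_addl.
under eq_bigr => i _ do rewrite Hin.
apply: (@sum_ord_eq (fun i => \sum_(j < 7) coef2 p i j * beta i j) (size p) 7) => i Hi.
  by rewrite big1 // => j _; rewrite /coef2 (nth_default _ Hi) coef0 mul0r.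
by rewrite big1 // => j _; rewrite Hp ?mul0r // (leq_trans Hi) // leq_addr.
Qed.

End P2.


Section P3.
Variable R : realType.
Local Notation cst := Defs.cst.
Implicit Types p q : {poly {poly R}}.
Implicit Types c x y : R.

Definition mk (k : 'I_10) : {poly {poly R}} := mon R (mono k).1 (mono k).2.

Lemma mono_deg (k : 'I_10) : ((mono k).1 + (mono k).2 <= 3)%N.
Proof. by case: k => [[|[|[|[|[|[|[|[|[|[|//]]]]]]]]]] ?]. Qed.

Lemma mono_inj : injective mono.
Proof.
move=> k k' H; apply/eqP; rewrite -val_eqE /=.
rewrite -(@nth_uniq _ (0,0)%N monos) //; first by rewrite /mono in H; rewrite H.
Qed.

Lemma expand3 p : deg_le p 3 ->
  p = \sum_(k < 10) cst (coef2 p (mono k).1 (mono k).2) * mk k.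
Proof.
move=> Hp; apply: poly2P => u v; rewrite coef2_sum.
have E (a b : nat) : coef2 (mon R a b) u v = if (u == a) && (v == b) then 1 else 0.
  by rewrite coef2_mon; case: (u == a); case: (v == b); rewrite ?mulr1 ?mulr0.
under eq_bigr => k _ do rewrite coef2_cstM /mk E.
rewrite !big_ord_recr big_ord0 /= add0r.
clear E; case: u => [|[|[|[|u]]]]; case: v => [|[|[|[|v]]]] /=;
  rewrite ?mulr0 ?mul0r ?mulr1 ?addr0 ?add0r //.
all: try (by apply: Hp).
Qed.

Lemma coef2_comb (cc : 'I_10 -> R) (k : 'I_10) :
  coef2 (\sum_(l < 10) cst (cc l) * mk l) (mono k).1 (mono k).2 = cc k.
Proof.
rewrite coef2_sum (bigD1 k) //= coef2_cstM /mk coef2_mon !eqxx mulr1 mulr1.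
rewrite big1 ?addr0 // => l Hl; rewrite coef2_cstM coef2_mon.
case: (eqVneq (mono k).1 (mono l).1) => E1; last by rewrite mul0r mulr0.
case: (eqVneq (mono k).2 (mono l).2) => E2; last by rewrite mulr0 mulr0.
by case/eqP: Hl; apply: mono_inj; case: (mono k) E1 E2 => ? ? /= -> ->; case: (mono l).
Qed.

Lemma expand7 p : deg_le p 6 ->
  p = \sum_(i < 7) \sum_(j < 7) cst (coef2 p i j) * mon R i j.
Proof.
move=> Hp; apply: poly2P => u v; rewrite coef2_sum.
under eq_bigr => i _ do rewrite coef2_sum.
have E (i j : nat) : coef2 (cst (coef2 p i j) * mon R i j) u v =
   (u == i)%:R * ((v == j)%:R * coef2 p i j).
  by rewrite coef2_cstM coef2_mon mulrC -mulrA.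
under eq_bigr => i _ do under eq_bigr => j _ do rewrite E.
under eq_bigr => i _ do rewrite -mulr_sumr (sum_delta 7 v (fun j => coef2 p i j)).
rewrite (sum_delta 7 u (fun i => if (v < 7)%N then coef2 p i v else 0)).
have [Hu|Hu] := ltnP u 7; have [Hv|Hv] := ltnP v 7 => //.
- by rewrite Hp // (leq_trans Hv (leq_addl _ _)).
- by rewrite Hp // (leq_trans Hu (leq_addr _ _)).
- by rewrite Hp // (leq_trans Hu (leq_addr _ _)).
Qed.

Lemma deg_le_mk k : deg_le (mk k) 3.
Proof. exact: (deg_le_mono (mono_deg k) (@deg_le_mon R _ _)). Qed.

Lemma deg_le_mul3 p q : deg_le p 3 -> deg_le q 3 -> deg_le (p * q) 6.
Proof.
move=> Hp Hq; rewrite (expand3 Hp) mulr_suml; apply: deg_le_sum => k _.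
rewrite -mulrA; apply: deg_le_cstM; rewrite /mk.
apply: (deg_le_mono _ (deg_le_monM (a:=(mono k).1) (b:=(mono k).2) Hq)).
by rewrite (leq_add (mono_deg k)).
Qed.

Lemma deg_le_comb (cc : 'I_10 -> R) : deg_le (\sum_(l < 10) cst (cc l) * mk l) 3.
Proof. by apply: deg_le_sum => l _; apply: deg_le_cstM; exact: deg_le_mk. Qed.

End P3.


Section P4.
Variable R : realType.
Local Notation cst := Defs.cst.
Implicit Types p q : {poly {poly R}}.
Implicit Types c x y : R.
Variable beta : nat -> nat -> R.
Local Notation M := (M3 beta).

Lemma M3_tr : M^T = M.
Proof. by apply/matrixP => i j; rewrite !mxE addnC [((mono i).2 + _)%N]addnC. Qed.

Definition cv p : 'cV[R]_10 := \col_k coef2 p (mono k).1 (mono k).2.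

Lemma polycol_mul p : polycol beta p = M *m cv p.
Proof.
apply/matrixP => i j; rewrite !mxE summxE; apply: eq_bigr => k _.
by rewrite !mxE mulrC.
Qed.

Lemma mk_mkL7 (r k : 'I_10) : L7 beta (mk R r * mk R k) = M r k.
Proof.
rewrite /mk mon_mul L7_mon ?mxE //.
  by rewrite ltnS (leq_trans (leq_add (leq_addr _ _) (leq_addr _ _)) (leq_add (mono_deg r) (mono_deg k))).
by rewrite ltnS (leq_trans (leq_add (leq_addl _ _) (leq_addl _ _)) (leq_add (mono_deg r) (mono_deg k))).
Qed.

Lemma polycol_entry p r : deg_le p 3 -> polycol beta p r 0 = L7 beta (mk R r * p).
Proof.
move=> Hp; rewrite [in RHS](expand3 Hp) mulr_sumr L7_sum polycol_mul mxE.
by apply: eq_bigr => k _; rewrite mulrCA L7_cstM mk_mkL7 !mxE mulrC.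
Qed.

Lemma quad p : deg_le p 3 -> ((cv p)^T *m M *m cv p) 0 0 = L7 beta (p * p).
Proof.
move=> Hp; rewrite -mulmxA -polycol_mul mxE.
rewrite [X in L7 _ (X * _)](expand3 Hp) mulr_suml L7_sum; apply: eq_bigr => k _.
by rewrite -mulrA L7_cstM polycol_entry // !mxE.
Qed.

Definition Pc (cc : 'cV[R]_10) : {poly {poly R}} := \sum_(k < 10) cst (cc k 0) * mk R k.

Lemma cv_Pc cc : cv (Pc cc) = cc.
Proof. by apply/matrixP => i j; rewrite mxE /Pc coef2_comb ord1. Qed.

Lemma deg_le_Pc cc : deg_le (Pc cc) 3.
Proof. exact: deg_le_comb. Qed.

Lemma Pc_cv p : deg_le p 3 -> Pc (cv p) = p.
Proof.
move=> Hp; rewrite [RHS](expand3 Hp) /Pc; apply: eq_bigr => k _; by rewrite mxE.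
Qed.

Lemma eval2_Pc cc x y : eval2 (Pc cc) x y =
  \sum_(k < 10) cc k 0 * (x ^+ (mono k).1 * y ^+ (mono k).2).
Proof.
rewrite /Pc eval2_sum; apply: eq_bigr => k _.
by rewrite eval2M eval2_cst /mk eval2_mon.
Qed.

Definition Kp (s : 'I_10) := Pc (row s (kermx M))^T.

Lemma polycol_Kp s : polycol beta (Kp s) = 0.
Proof.
rewrite polycol_mul cv_Pc.
have -> : M *m (row s (kermx M))^T = (row s (kermx M) *m M)^T by rewrite trmx_mul M3_tr.
by rewrite -row_mul mulmx_ker; apply/matrixP => i j; rewrite !mxE.
Qed.

Lemma ker_comb p : deg_le p 3 -> polycol beta p = 0 ->
  exists u : 'rV[R]_10, forall x y,
    eval2 p x y = \sum_(s < 10) u 0 s * eval2 (Kp s) x y.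
Proof.
move=> Hp H0.
have Hk : ((cv p)^T <= kermx M)%MS.
  apply/sub_kermxP.
  have -> : (cv p)^T *m M = (M *m cv p)^T by rewrite trmx_mul M3_tr.
  rewrite -polycol_mul H0.
  by apply/matrixP => i j; rewrite !mxE.
set K := kermx M in Hk *.
set u := (cv p)^T *m pinvmx K.
have E k : cv p k 0 = \sum_(s < 10) u 0 s * K s k.
  have -> : cv p k 0 = (cv p)^T 0 k by rewrite !mxE.
  by rewrite -{1}(mulmxKpV Hk) mxE.
exists u => x y.
rewrite -[in LHS](Pc_cv Hp) eval2_Pc.
under eq_bigr => k _ do rewrite E mulr_suml.
rewrite exchange_big; apply: eq_bigr => s _.
rewrite /Kp eval2_Pc mulr_sumr; apply: eq_bigr => k _.
have -> : (row s K)^T k 0 = K s k by rewrite !mxE.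
by rewrite !mulrA.
Qed.

End P4.


Section P5.
Variable R : realType.
Local Notation cst := Defs.cst.
Implicit Types p q : {poly {poly R}}.
Implicit Types c x y : R.
Variable beta : nat -> nat -> R.
Local Notation M := (M3 beta).
Variable pts : 'I_8 -> R * R.
Local Notation W := (WB1 pts).

Definition mB (l : 'I_8) := mk R (B1 l).
Definition PB (cc : 'cV[R]_8) : {poly {poly R}} := \sum_(l < 8) cst (cc l 0) * mB l.

Lemma deg_le_PB cc : deg_le (PB cc) 3.
Proof. by apply: deg_le_sum => l _; apply: deg_le_cstM; exact: deg_le_mk. Qed.

Lemma W_E k l : W k l = eval2 (mB l) (pts k).1 (pts k).2.
Proof. by rewrite !mxE /mB /mk eval2_mon. Qed.

Lemma eval2_PB cc k : eval2 (PB cc) (pts k).1 (pts k).2 = (W *m cc) k 0.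
Proof.
rewrite /PB eval2_sum mxE; apply: eq_bigr => l _.
by rewrite eval2M eval2_cst W_E mulrC.
Qed.

Lemma polycol_PB cc : polycol beta (PB cc) = colsub B1 M *m cc.
Proof.
apply/matrixP => r j; rewrite (ord1 j) polycol_entry; last exact: deg_le_PB.
rewrite /PB.
rewrite mulr_sumr L7_sum mxE; apply: eq_bigr => l _.
by rewrite mulrCA L7_cstM /mB mk_mkL7 !mxE mulrC.
Qed.

Hypothesis Hvar : forall x y, variety beta x y <-> exists k, pts k = (x, y).

Lemma WI : weakly_consistent beta -> B1_basis M -> W \in unitmx.
Proof.
move=> WC [Hfree _].
rewrite -unitmx_tr -row_free_unit; apply: contraT => Hnf.
have : kermx W^T != 0 by rewrite kermx_eq0.
case/eqP/row_matrixP/boolp.existsNP => s /eqP; rewrite row0 => Hs.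
set v := row s (kermx W^T) in Hs.
have Hv : W *m v^T = 0.
  by rewrite -[W]trmxK -trmx_mul -row_mul mulmx_ker row0 trmx0.
have Hp : polycol beta (PB v^T) = 0.
  apply: WC; first exact: deg_le_PB.
  move=> x y /Hvar [k Hk].
  by rewrite -[x]/((x, y).1) -[y]/((x, y).2) -Hk eval2_PB Hv mxE.
have H0 : v *m (colsub B1 M)^T = 0.
  by rewrite -[v]trmxK -trmx_mul -polycol_PB Hp trmx0.
by move/eqP: H0; rewrite (mulmx_free_eq0 _ Hfree) (negbTE Hs).
Qed.

End P5.


Section P6.
Variable R : realType.
Local Notation cst := Defs.cst.
Implicit Types p q t : {poly {poly R}}.
Implicit Types c x y : R.
Variable beta : nat -> nat -> R.
Local Notation M := (M3 beta).
Variable pts : 'I_8 -> R * R.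
Local Notation W := (WB1 pts).

Hypothesis Hvar : forall x y, variety beta x y <-> exists k, pts k = (x, y).
Hypothesis WC : weakly_consistent beta.
Hypothesis Wu : W \in unitmx.
Hypothesis Hred4 : forall i j, (i + j <= 2)%N ->
  Lambda beta (reduced (invmx W *m \col_k ((pts k).1 ^+ 4)) (mon R 4 0) i j) = 0.
Hypothesis Hred31 : forall i j, (i + j <= 2)%N ->
  Lambda beta (reduced (invmx W *m \col_k ((pts k).1 ^+ 3 * (pts k).2)) (mon R 3 1) i j) = 0.

Definition evalv p : 'cV[R]_8 := \col_k eval2 p (pts k).1 (pts k).2.
Definition ct p := invmx W *m evalv p.
Definition rt p := p - PB (ct p).

Lemma rt_van p k : eval2 (rt p) (pts k).1 (pts k).2 = 0.
Proof. by rewrite /rt eval2B eval2_PB /ct mulmxA mulmxV // mul1mx mxE subrr. Qed.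

Definition rho : 'cV[R]_8 :=
  invmx W^T *m \col_l beta (mono (B1 l)).1 (mono (B1 l)).2.
Definition Lr p := \sum_k rho k 0 * eval2 p (pts k).1 (pts k).2.
Definition D p := L7 beta p - Lr p.

Lemma LrD p q : Lr (p + q) = Lr p + Lr q.
Proof. by rewrite /Lr -big_split; apply: eq_bigr => k _; rewrite eval2D mulrDr. Qed.
Lemma LrN p : Lr (- p) = - Lr p.
Proof. by rewrite /Lr -sumrN; apply: eq_bigr => k _; rewrite eval2N mulrN. Qed.
Lemma Lr_cstM c p : Lr (cst c * p) = c * Lr p.
Proof. by rewrite /Lr mulr_sumr; apply: eq_bigr => k _; rewrite eval2M eval2_cst mulrCA. Qed.
Lemma Lr_van p : (forall k, eval2 p (pts k).1 (pts k).2 = 0) -> Lr p = 0.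
Proof. by move=> H; rewrite /Lr big1 // => k _; rewrite H mulr0. Qed.
Lemma Lr0 : Lr 0 = 0.
Proof. by apply: Lr_van => k; rewrite /eval2 !horner0. Qed.

Lemma DD p q : D (p + q) = D p + D q.
Proof. by rewrite /D L7D LrD opprD addrACA. Qed.
Lemma D_cstM c p : D (cst c * p) = c * D p.
Proof. by rewrite /D L7_cstM Lr_cstM mulrBr. Qed.
Lemma D_sum I (r : seq I) (P : pred I) (F : I -> {poly {poly R}}) :
  D (\sum_(k <- r | P k) F k) = \sum_(k <- r | P k) D (F k).
Proof.
elim/big_rec2: _ => [|i a b _ <-]; first by rewrite /D L7_0 Lr0 subrr.
by rewrite DD.
Qed.

Lemma D_mB l : D (mB R l) = 0.
Proof.
rewrite /D /mB /mk L7_mon; last 2 first.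
- by rewrite ltnS; apply: (leq_trans (leq_addr _ _) (leq_trans (mono_deg (B1 l)) _)).
- by rewrite ltnS; apply: (leq_trans (leq_addl _ _) (leq_trans (mono_deg (B1 l)) _)).
rewrite /Lr.
have -> : \sum_k rho k 0 * eval2 (mon R (mono (B1 l)).1 (mono (B1 l)).2) (pts k).1 (pts k).2
  = (W^T *m rho) l 0.
  by rewrite mxE; apply: eq_bigr => k _; rewrite [W^T _ _]mxE W_E mulrC.
by rewrite /rho mulmxA mulmxV ?unitmx_tr // mul1mx mxE subrr.
Qed.

Lemma deg_le_rt t : deg_le t 3 -> deg_le (rt t) 3.
Proof. by move=> Ht; apply: deg_leB => //; exact: deg_le_PB. Qed.

Lemma D3 t r : deg_le t 3 -> D (mk R r * rt t) = 0.
Proof.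
move=> Ht.
have Hp : polycol beta (rt t) = 0.
  apply: WC; first exact: deg_le_rt.
  move=> x y /Hvar [k Hk].
  by rewrite -[x]/((x, y).1) -[y]/((x, y).2) -Hk rt_van.
rewrite /D Lr_van; last by move=> k; rewrite eval2M rt_van mulr0.
rewrite -polycol_entry; last exact: deg_le_rt.
by rewrite Hp mxE subr0.
Qed.

Lemma STEP u v t : D (mon R u v * rt t) = 0 ->
   (forall l, D (mon R (u + (mono (B1 l)).1) (v + (mono (B1 l)).2)) = 0) ->
   D (mon R u v * t) = 0.
Proof.
move=> H1 H2.
have -> : mon R u v * t = mon R u v * rt t +
    \sum_(l < 8) cst (ct t l 0) * mon R (u + (mono (B1 l)).1) (v + (mono (B1 l)).2).
  rewrite /rt mulrBr /PB mulr_sumr.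
  rewrite (eq_bigr (fun l => cst (ct t l 0) * mon R (u + (mono (B1 l)).1) (v + (mono (B1 l)).2))).
    by rewrite subrK.
  by move=> l _; rewrite mulrCA /mB /mk mon_mul.
rewrite DD H1 add0r D_sum big1 // => l _; by rewrite D_cstM H2 mulr0.
Qed.

Definition Z i j := D (mon R i j) = 0.

Lemma STEP3 a b (r : 'I_10) : deg_le (mon R a b) 3 ->
  (forall l, Z ((mono r).1 + (mono (B1 l)).1) ((mono r).2 + (mono (B1 l)).2)) ->
  Z ((mono r).1 + a) ((mono r).2 + b).
Proof.
by move=> Hd H; rewrite /Z -mon_mul; apply: STEP => //; exact: D3.
Qed.

Lemma evalv_mon a b : evalv (mon R a b) = \col_k ((pts k).1 ^+ a * (pts k).2 ^+ b).
Proof. by apply/matrixP => i j; rewrite !mxE eval2_mon. Qed.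

Lemma deg_le_red u v t : deg_le t 4 -> deg_le (mon R u v * rt t) (u + v + 4).
Proof.
move=> Ht; apply: deg_le_monM; apply: deg_leB => //.
exact: (deg_le_mono _ (deg_le_PB _)).
Qed.

Lemma STEP4x u v : (u + v <= 2)%N ->
  (forall l, Z (u + (mono (B1 l)).1) (v + (mono (B1 l)).2)) -> Z (u + 4) v.
Proof.
move=> Huv H; rewrite /Z -[v in mon R _ v]addn0 -mon_mul; apply: STEP => //.
rewrite /D Lr_van; last by move=> k; rewrite eval2M rt_van mulr0.
rewrite -Lambda_L7; last first.
  apply: (deg_le_mono _ (deg_le_red (u:=u) (v:=v) _)); first exact: (leq_add Huv (leqnn 4)).
  exact: (@deg_le_mon R 4 0).
have := Hred4 Huv; rewrite /reduced /rt /ct evalv_mon.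
have -> : \col_k ((pts k).1 ^+ 4 * (pts k).2 ^+ 0) = \col_k ((pts k).1 ^+ 4) :> 'cV[R]_8.
  by apply/matrixP => i j; rewrite !mxE expr0 mulr1.
by move=> ->; rewrite subr0.
Qed.

Lemma STEP4y u v : (u + v <= 2)%N ->
  (forall l, Z (u + (mono (B1 l)).1) (v + (mono (B1 l)).2)) -> Z (u + 3) (v + 1).
Proof.
move=> Huv H; rewrite /Z -mon_mul; apply: STEP => //.
rewrite /D Lr_van; last by move=> k; rewrite eval2M rt_van mulr0.
rewrite -Lambda_L7; last first.
  apply: (deg_le_mono _ (deg_le_red (u:=u) (v:=v) _)); first exact: (leq_add Huv (leqnn 4)).
  exact: (@deg_le_mon R 3 1).
have := Hred31 Huv; rewrite /reduced /rt /ct evalv_mon.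
have -> : \col_k ((pts k).1 ^+ 3 * (pts k).2 ^+ 1) = \col_k ((pts k).1 ^+ 3 * (pts k).2) :> 'cV[R]_8.
  by apply/matrixP => i j; rewrite !mxE expr1.
by move=> ->; rewrite subr0.
Qed.


Ltac fin8 := let l := fresh in move=> l; case: l => [[|[|[|[|[|[|[|[|//]]]]]]]] ?]; assumption.

Lemma Dall i j : (i + j <= 6)%N -> Z i j.
Proof.
have z00 : Z 0 0 := D_mB (@Ordinal 8 0 isT).
have z10 : Z 1 0 := D_mB (@Ordinal 8 1 isT).
have z01 : Z 0 1 := D_mB (@Ordinal 8 2 isT).
have z20 : Z 2 0 := D_mB (@Ordinal 8 3 isT).
have z11 : Z 1 1 := D_mB (@Ordinal 8 4 isT).
have z02 : Z 0 2 := D_mB (@Ordinal 8 5 isT).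
have z30 : Z 3 0 := D_mB (@Ordinal 8 6 isT).
have z21 : Z 2 1 := D_mB (@Ordinal 8 7 isT).
have z12 : Z 1 2 := STEP3 (a:=1) (b:=2) (r:=@Ordinal 10 0 isT) (@deg_le_mon R 1 2) ltac:(fin8).
have z03 : Z 0 3 := STEP3 (a:=0) (b:=3) (r:=@Ordinal 10 0 isT) (@deg_le_mon R 0 3) ltac:(fin8).
have z40 : Z 4 0 := STEP4x (u:=0) (v:=0) isT ltac:(fin8).
have z31 : Z 3 1 := STEP4y (u:=0) (v:=0) isT ltac:(fin8).
have z22 : Z 2 2 := STEP3 (a:=1) (b:=2) (r:=@Ordinal 10 1 isT) (@deg_le_mon R 1 2) ltac:(fin8).
have z13 : Z 1 3 := STEP3 (a:=1) (b:=2) (r:=@Ordinal 10 2 isT) (@deg_le_mon R 1 2) ltac:(fin8).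
have z04 : Z 0 4 := STEP3 (a:=0) (b:=3) (r:=@Ordinal 10 2 isT) (@deg_le_mon R 0 3) ltac:(fin8).
have z50 : Z 5 0 := STEP4x (u:=1) (v:=0) isT ltac:(fin8).
have z41 : Z 4 1 := STEP4x (u:=0) (v:=1) isT ltac:(fin8).
have z32 : Z 3 2 := STEP4y (u:=0) (v:=1) isT ltac:(fin8).
have z23 : Z 2 3 := STEP3 (a:=1) (b:=2) (r:=@Ordinal 10 4 isT) (@deg_le_mon R 1 2) ltac:(fin8).
have z14 : Z 1 4 := STEP3 (a:=1) (b:=2) (r:=@Ordinal 10 5 isT) (@deg_le_mon R 1 2) ltac:(fin8).
have z05 : Z 0 5 := STEP3 (a:=0) (b:=3) (r:=@Ordinal 10 5 isT) (@deg_le_mon R 0 3) ltac:(fin8).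
have z60 : Z 6 0 := STEP4x (u:=2) (v:=0) isT ltac:(fin8).
have z51 : Z 5 1 := STEP4x (u:=1) (v:=1) isT ltac:(fin8).
have z42 : Z 4 2 := STEP4x (u:=0) (v:=2) isT ltac:(fin8).
have z33 : Z 3 3 := STEP4y (u:=0) (v:=2) isT ltac:(fin8).
have z24 : Z 2 4 := STEP3 (a:=1) (b:=2) (r:=@Ordinal 10 8 isT) (@deg_le_mon R 1 2) ltac:(fin8).
have z15 : Z 1 5 := STEP3 (a:=1) (b:=2) (r:=@Ordinal 10 9 isT) (@deg_le_mon R 1 2) ltac:(fin8).
have z06 : Z 0 6 := STEP3 (a:=0) (b:=3) (r:=@Ordinal 10 9 isT) (@deg_le_mon R 0 3) ltac:(fin8).
case: i => [|[|[|[|[|[|[|i]]]]]]]; case: j => [|[|[|[|[|[|[|j]]]]]]] H;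
  first [assumption | by move: H; rewrite ?addnS ?addSn].
Qed.

Lemma D6 p : deg_le p 6 -> D p = 0.
Proof.
move=> Hp; rewrite (expand7 Hp) D_sum big1 // => i _; rewrite D_sum big1 // => j _.
rewrite D_cstM; case: (leqP (i + j) 6) => H.
  by rewrite (Dall H) mulr0.
by rewrite Hp // mul0r.
Qed.

Lemma rho_ge0 : psd_mx M -> forall k, 0 <= rho k 0.
Proof.
move=> Hpsd k; set q := PB (col k (invmx W)).
have Hq : deg_le q 3 by exact: deg_le_PB.
have Ev k' : eval2 q (pts k').1 (pts k').2 = (k' == k)%:R.
  rewrite eval2_PB.
  have -> : (W *m col k (invmx W)) k' 0 = (W *m invmx W) k' k.
    by rewrite !mxE; apply: eq_bigr => l _; rewrite !mxE.
  by rewrite mulmxV // mxE.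
have -> : rho k 0 = Lr (q * q).
  rewrite /Lr (bigD1 k) //= big1 ?addr0; last first.
    by move=> k' Hk; rewrite eval2M Ev (negbTE Hk) mul0r mulr0.
  by rewrite eval2M Ev eqxx !mulr1n !mulr1.
have : D (q * q) = 0 by apply: D6; exact: deg_le_mul3.
rewrite /D => /eqP; rewrite subr_eq0 => /eqP <-.
by rewrite -quad.
Qed.

Lemma moments i j : (i + j <= 6)%N ->
  beta i j = \sum_k rho k 0 * ((pts k).1 ^+ i * (pts k).2 ^+ j).
Proof.
move=> H; have := Dall H; rewrite /Z /D => /eqP; rewrite subr_eq0 => /eqP.
rewrite L7_mon; last 2 first.
- by rewrite ltnS (leq_trans (leq_addr _ _) H).
- by rewrite ltnS (leq_trans (leq_addl _ _) H).
by move=> ->; rewrite /Lr; apply: eq_bigr => k _; rewrite eval2_mon.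
Qed.

End P6.


Section P7.
Variable R : realType.
Local Notation cst := Defs.cst.
Implicit Types p q : {poly {poly R}}.
Implicit Types c x y : R.
Variable beta : nat -> nat -> R.
Local Notation M := (M3 beta).

Lemma eval2_exp7 p x y : deg_le p 6 -> eval2 p x y =
  \sum_(i < 7) \sum_(j < 7) (if (i + j <= 6)%N then coef2 p i j * (x ^+ i * y ^+ j) else 0).
Proof.
move=> Hp; rewrite {1}(expand7 Hp) eval2_sum; apply: eq_bigr => i _.
rewrite eval2_sum; apply: eq_bigr => j _.
rewrite eval2M eval2_cst eval2_mon; case: ifP => // H.
by rewrite Hp ?mul0r // ltnNge H.
Qed.

Lemma L7_exp7 p : deg_le p 6 -> L7 beta p =
  \sum_(i < 7) \sum_(j < 7) (if (i + j <= 6)%N then coef2 p i j * beta i j else 0).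
Proof.
move=> Hp; rewrite /L7; apply: eq_bigr => i _; apply: eq_bigr => j _.
case: ifP => // H; by rewrite Hp ?mul0r // ltnNge H.
Qed.

Variable mu : {measure set (R * R)%type -> \bar R}.
Hypothesis Hrep : representing mu beta.

Local Open Scope ereal_scope.

Let termf p (i j : nat) (z : R * R) : \bar R :=
  ((if (i + j <= 6)%N then coef2 p i j * (z.1 ^+ i * z.2 ^+ j) else 0)%R)%:E.

Let term_int p i j : mu.-integrable setT (termf p i j).
Proof.
rewrite /termf; have [H|H] := boolP (i + j <= 6)%N; rewrite ?H ?(negbTE H).
  apply: (eq_integrable measurableT _ _ _ (integrableZl measurableT (coef2 p i j) (Hrep H).1)).
  by move=> z _; rewrite EFinM.
exact: integrable0.
Qed.

Let term_integral p i j : \int[mu]_z termf p i j z =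
  ((if (i + j <= 6)%N then coef2 p i j * beta i j else 0)%R)%:E.
Proof.
rewrite /termf; have [H|H] := boolP (i + j <= 6)%N; rewrite ?H ?(negbTE H).
  rewrite -[RHS]/((coef2 p i j)%:E * (beta i j)%:E) -(Hrep H).2.
  exact: (integralZl measurableT (Hrep H).1).
by rewrite integral0_eq.
Qed.

Lemma int_poly p : deg_le p 6 ->
  mu.-integrable setT (fun z => (eval2 p z.1 z.2)%:E) /\
  \int[mu]_z (eval2 p z.1 z.2)%:E = (L7 beta p)%:E.
Proof.
move=> Hp.
have -> : (fun z : R * R => (eval2 p z.1 z.2)%:E) =
    (fun z => \sum_(i < 7) \sum_(j < 7) termf p i j z).
  apply/funext => z; rewrite (eval2_exp7 _ _ Hp) -sumEFin.
  by apply: eq_bigr => i _; rewrite -sumEFin.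
split.
  apply: (integrable_sum measurableT) => i _.
  apply: (integrable_sum measurableT) => j _; exact: term_int.
rewrite (integral_sum measurableT); last first.
  by move=> i; apply: (integrable_sum measurableT) => j _; exact: term_int.
rewrite (L7_exp7 Hp) -sumEFin; apply: eq_bigr => i _.
rewrite (integral_sum measurableT); last by move=> j; exact: term_int.
by rewrite -sumEFin; apply: eq_bigr => j _; rewrite term_integral.
Qed.


Lemma Kp_sq_int0 s : \int[mu]_z (eval2 (Kp beta s * Kp beta s) z.1 z.2)%:E = 0.
Proof.
have Hd : deg_le (Kp beta s) 3 := @deg_le_Pc R _.
rewrite (int_poly (deg_le_mul3 Hd Hd)).2 -(quad beta Hd) -mulmxA -polycol_mul.
by rewrite polycol_Kp mulmx0 mxE.
Qed.

Lemma ae_Kp s : \forall z \ae mu, eval2 (Kp beta s) z.1 z.2 = 0%R.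
Proof.
have Hd : deg_le (Kp beta s) 3 := @deg_le_Pc R _.
have [Hint _] := int_poly (deg_le_mul3 Hd Hd).
have := Kp_sq_int0 s.
have -> : \int[mu]_z (eval2 (Kp beta s * Kp beta s) z.1 z.2)%:E =
          \int[mu]_z `|(eval2 (Kp beta s * Kp beta s) z.1 z.2)%:E|.
  apply: eq_integral => z _; rewrite abse_EFin ger0_norm // eval2M.
  by rewrite -expr2 sqr_ge0.
move/(ae_eq_integral_abs mu measurableT (measurable_int mu Hint)).
apply: filterS => z /(_ Logic.I) /= [].
by rewrite eval2M => /eqP; rewrite mulf_eq0 orbb => /eqP.
Qed.

Lemma ae_variety : \forall z \ae mu, variety beta z.1 z.2.
Proof.
have H := @filter_forall _ 'I_10 (fun s z => eval2 (Kp beta s) z.1 z.2 = 0%R)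
  _ (ae_filter_ringOfSetsType mu) ae_Kp.
apply: filterS H => z Hz p Hp Hpc.
have [u Hu] := ker_comb Hp Hpc.
by rewrite Hu big1 // => s _; rewrite Hz mulr0.
Qed.

Variable pts : 'I_8 -> R * R.
Hypothesis Hvar : forall x y, variety beta x y <-> exists k, pts k = (x, y).

Lemma FC q : deg_le q 6 -> (forall k, eval2 q (pts k).1 (pts k).2 = 0%R) ->
  L7 beta q = 0%R.
Proof.
move=> Hq Hz; have [Hint Hi] := int_poly Hq.
apply: EFin_inj; rewrite -Hi.
rewrite (ae_eq_integral (fun=> 0%E)) ?integral0_eq //.
  exact: (measurable_int _ Hint).
apply: filterS ae_variety => z Hv _.
have [k Hk] := (Hvar z.1 z.2).1 Hv.
by rewrite /= -[z.1]/((z.1, z.2).1) -[z.2]/((z.1, z.2).2) -Hk Hz.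
Qed.

End P7.


Section P8.
Variable R : realType.
Variables (a : 'I_8 -> (R * R)%type) (r : 'I_8 -> R) (r0 : forall k, 0 <= r k).

Definition mus : {measure set (R * R)%type -> \bar R} :=
  msum (fun n => mscale (NngNum (r0 (inord n))) (\d_(a (inord n)))) 8.

Lemma maxdiff (x : R) : (Num.max x 0 - Num.max (- x) 0 = x)%R.
Proof.
have [H|H] := boolP (0 <= x).
  by rewrite (max_l H) max_r ?subr0 // oppr_le0.
have H' : x <= 0 by rewrite leNgt; apply: contra H => /ltW.
by rewrite (max_r H') max_l ?sub0r ?opprK // oppr_ge0.
Qed.

Local Open Scope ereal_scope.

Lemma ge0_int_mus (h : R * R -> \bar R) : measurable_fun [set: (R * R)%type] h ->
  (forall z, 0 <= h z) -> \int[mus]_z h z = \sum_(k < 8) (r k)%:E * h (a k).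
Proof.
move=> mh h0; rewrite ge0_integral_measure_sum //; apply: eq_bigr => n _.
rewrite ge0_integral_mscale //= integral_dirac // diracE in_setT mul1e.
by rewrite inord_val.
Qed.

Lemma int_mus (g : R * R -> R) : measurable_fun [set: (R * R)%type] g ->
  mus.-integrable setT (fun z => (g z)%:E) /\
  \int[mus]_z (g z)%:E = (\sum_(k < 8) r k * g (a k))%:E.
Proof.
move=> mg; have mf : measurable_fun [set: (R * R)%type] (fun z => (g z)%:E).
  exact/measurable_EFinP.
split.
  apply/integrableP; split => //.
  rewrite ge0_int_mus; last 2 first.
  - exact: measurableT_comp.
  - by move=> z /=; rewrite lee_fin normr_ge0.
  under eq_bigr do rewrite abse_EFin -EFinM.
  by rewrite sumEFin; exact: ltry.
rewrite integralE ge0_int_mus; last 2 first.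
- exact: measurable_funepos.
- by move=> z; exact: funepos_ge0.
rewrite ge0_int_mus; last 2 first.
- exact: measurable_funeneg.
- by move=> z; exact: funeneg_ge0.
have E1 k : (r k)%:E * (fun z => (g z)%:E)^\+ (a k) = (r k * Num.max (g (a k)) 0)%:E.
  by rewrite funeposE EFinM EFin_max.
have E2 k : (r k)%:E * (fun z => (g z)%:E)^\- (a k) = (r k * Num.max (- g (a k)) 0)%:E.
  by rewrite funenegE EFinM EFin_max.
under eq_bigr do rewrite E1.
under [X in _ - X]eq_bigr do rewrite E2.
rewrite !sumEFin -EFinB -sumrB; congr EFin; apply: eq_bigr => k _.
by rewrite -mulrBr maxdiff.
Qed.

End P8.


Unset Implicit Arguments.

Lemma red_eq (R : realType) (c : 'cV[R]_8) t i j :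
  reduced c t i j = mon R i j * (t - PB c).
Proof. by []. Qed.

Lemma deg_le_reduced (R : realType) (c : 'cV[R]_8) t i j :
  deg_le t 4 -> (i + j <= 2)%N -> deg_le (reduced c t i j) 6.
Proof.
move=> Ht Hij; rewrite red_eq.
apply: (deg_le_mono _ (deg_le_monM (a:=i) (b:=j) (n:=4) _)).
  exact: (leq_add Hij (leqnn 4)).
apply: deg_leB => //; exact: (deg_le_mono _ (deg_le_PB _)).
Qed.

Lemma reduced_van (R : realType) (pts : 'I_8 -> R * R) t i j v k :
  WB1 pts \in unitmx ->
  v = \col_k eval2 t (pts k).1 (pts k).2 ->
  eval2 (reduced (invmx (WB1 pts) *m v) t i j) (pts k).1 (pts k).2 = 0.
Proof.
move=> Wu ->; rewrite red_eq eval2M eval2B eval2_PB mulmxA mulmxV // mul1mx mxE.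
by rewrite subrr mulr0.
Qed.

Theorem theorem5p1 (R : realType) (beta : nat -> nat -> R)
  (pts : 'I_8 -> R * R) :
  psd_mx (M3 beta) ->
  pd_mx (M2 beta) ->
  \rank (M3 beta) = 8%N ->
  injective pts ->
  (forall x y : R, variety beta x y <-> exists k, pts k = (x, y)) ->
  B1_basis (M3 beta) ->
  let a := invmx (WB1 pts) *m \col_k ((pts k).1 ^+ 4) in
  let b := invmx (WB1 pts) *m \col_k ((pts k).1 ^+ 3 * (pts k).2) in
  (exists mu : {measure set (R * R)%type -> \bar R}, representing mu beta) <->
  (weakly_consistent beta /\
   (forall i j : nat, (i + j <= 2)%N ->
      Lambda beta (reduced a (mon R 4 0) i j) = 0 /\
      Lambda beta (reduced b (mon R 3 1) i j) = 0)).
Proof.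
move=> Hpsd _ _ _ Hvar HB a b.
have HinV k : variety beta (pts k).1 (pts k).2.
  by apply/Hvar; exists k; case: (pts k).
have Ea : \col_k ((pts k).1 ^+ 4) = \col_k eval2 (mon R 4 0) (pts k).1 (pts k).2.
  by apply/matrixP => k j; rewrite !mxE eval2_mon expr0 mulr1.
have Eb : \col_k ((pts k).1 ^+ 3 * (pts k).2) = \col_k eval2 (mon R 3 1) (pts k).1 (pts k).2.
  by apply/matrixP => k j; rewrite !mxE eval2_mon expr1.
split.
- case=> mu Hrep.
  have FC' := FC Hrep Hvar.
  have WC : weakly_consistent beta.
    move=> p Hp Hv; apply/matrixP => r j; rewrite (ord1 j) polycol_entry // mxE.
    apply: FC' => [|k]; first exact: deg_le_mul3 (deg_le_mk R r) Hp.
    by rewrite eval2M Hv ?mulr0 //; exact: HinV.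
  have Wu := WI Hvar WC HB.
  split => // i j Hij; split.
  + rewrite Lambda_L7; last by apply: deg_le_reduced => //; exact: (@deg_le_mon R 4 0).
    by apply: FC' => [|k]; [apply: deg_le_reduced => //; exact: (@deg_le_mon R 4 0)|
      exact: reduced_van].
  + rewrite Lambda_L7; last by apply: deg_le_reduced => //; exact: (@deg_le_mon R 3 1).
    by apply: FC' => [|k]; [apply: deg_le_reduced => //; exact: (@deg_le_mon R 3 1)|
      exact: reduced_van].
- case=> WC Hred.
  have Wu := WI Hvar WC HB.
  have Hred4 i j (H : (i + j <= 2)%N) := (Hred i j H).1.
  have Hred31 i j (H : (i + j <= 2)%N) := (Hred i j H).2.
  have r0 := rho_ge0 Hvar WC Wu Hred4 Hred31 Hpsd.
  exists (mus pts r0) => i j Hij.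
  have mg : measurable_fun [set: (R * R)%type] (fun z : R * R => z.1 ^+ i * z.2 ^+ j).
    apply: measurable_funM; apply: measurable_funX.
      exact: measurable_fst.
    exact: measurable_snd.
  have [Hi Hint] := int_mus pts r0 mg.
  split; first exact: Hi.
  by rewrite Hint -(moments Hvar WC Wu Hred4 Hred31 Hij).
Qed.
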